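(* Let $d \ge 1$, let $f: \mathbb{R}^d \to \mathbb{R}^d$ be differentiable, let ${\mathbf{x}}_0 \in \mathbb{R}^d$, and let $A = J_f({\mathbf{x}}_0)$ be the $d \times d$ Jacobian matrix of $f$ at ${\mathbf{x}}_0$. Assume $f$ is $L$-Lipschitz continuous with Lipschitz constant $L < 1$ (so that the spectral radius of $A$ satisfies $\rho(A) \le L < 1$). Then the quantity $$\mathcal{E}(A) := \mathrm{Tr}(A) - \log |\det(I + A)|$$ satisfies $$|\mathcal{E}(A)| \le d\big(-\log(1-L) - L\big).$$
   Context: $I$ denotes the $d\times d$ identity matrix, $\mathrm{Tr}$ the trace, and Lipschitz continuity is with respect to the Euclidean norm on $\mathbb{R}^d$. *)

(* Defs.v *)
From mathcomp Require Import all_boot all_order all_algebra.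
From mathcomp Require Import all_classical all_reals all_analysis.
Set Implicit Arguments. Unset Strict Implicit. Unset Printing Implicit Defensive.
Import Order.TTheory GRing.Theory Num.Theory.
Local Open Scope ring_scope.

(* Euclidean norm on row vectors R^n (the library's default norm on 'rV is the max norm). *)
Definition euclid_norm (R : realType) (n : nat) (v : 'rV[R]_n) : R :=
  Num.sqrt (\sum_(i < n) v ord0 i ^+ 2).

Definition euclid_lipschitz (R : realType) (n : nat) (f : 'rV[R]_n -> 'rV[R]_n) (L : R) : Prop :=
  forall x y : 'rV[R]_n, euclid_norm (f x - f y) <= L * euclid_norm (x - y).

(* Main.v *)
Require Import Defs.
From mathcomp Require Import all_boot all_order all_algebra.
From mathcomp Require Import all_classical all_reals all_analysis.
From mathcomp Require Import complex spectral mxred.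
From mathcomp Require Import ring lra.
Import Order.TTheory GRing.Theory Num.Theory.
Local Open Scope ring_scope.

Module Helpers.
Import numFieldNormedType.Exports.
Import ComplexField.Normc.
Local Notation Re := complex.Re. Local Notation Im := complex.Im.
Section S_a.
Variable R : realType.
Definition K (t : R) := ln t - (t - 1) + (t - 1) ^+ 2 / 2.
Lemma K_der (t : R) : 0 < t -> is_derive t 1 K ((t - 1) ^+ 2 / t).
Proof.
move=> t0; have := is_derive1_ln t0 => H.
rewrite /K.
apply: is_derive_eq.
rewrite !scaler0 !subr0 !scaler1 ?addr0 ?add0r. rewrite /GRing.scale /=.
field; lra.
Qed.

Lemma K_mono (a b : R) : 0 < a -> a <= b -> K a <= K b.
Proof.
move=> a0 ab.
have pos : forall x, x \in `[a, b] -> 0 < x.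
  by move=> x; rewrite in_itv /= => /andP[ax _]; apply: lt_le_trans ax.
apply: (@ger0_derive1_ndecr R K a b) => //.
- move=> x xi; have x0 : 0 < x by apply: pos; apply: subset_itv_oo_cc.
  by have := @K_der x x0 => -[].
- move=> x xi; have x0 : 0 < x by apply: pos; apply: subset_itv_oo_cc.
  have Kd := @K_der x x0; rewrite derive1E derive_val.
  by apply: divr_ge0 => //; [apply: sqr_ge0 | apply: ltW].
- apply: derivable_within_continuous => x xi.
  by have := @K_der x (pos x xi) => -[].
Qed.
Lemma K1 : K 1 = 0.
Proof. by rewrite /K ln1 subrr expr0n /= mul0r subr0 addr0. Qed.

Lemma bnd_a (r : R) : 0 <= r < 1 -> r + r ^+ 2 / 2 <= - ln (1 - r).
Proof.
move=> /andP[r0 r1].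
have := @K_mono (1 - r) 1 ltac:(lra) ltac:(lra).
rewrite K1 /K.
have -> : 1 - r - 1 = - r by ring.
rewrite sqrrN. lra.
Qed.

Lemma bnd_b (x : R) : 0 <= x -> x - x ^+ 2 / 2 <= ln (1 + x).
Proof.
move=> x0.
have := @K_mono 1 (1 + x) ltac:(lra) ltac:(lra).
rewrite K1 /K.
have -> : 1 + x - 1 = x by ring.
lra.
Qed.

Lemma bnd_c (p q : R) : 0 < p -> 0 < q -> 1 - q / p <= ln p - ln q.
Proof.
move=> p0 q0.
have h := @le_ln1Dx R (q / p - 1) ltac:(have : 0 < q / p by apply: divr_gt0; lra).
have e : 1 + (q / p - 1) = q / p by ring.
rewrite e ln_div ?posrE // in h.
lra.
Qed.
Lemma scal (x y r : R) : 0 <= r < 1 -> x ^+ 2 + y ^+ 2 <= r ^+ 2 ->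
  `| x - ln (Num.sqrt ((1 + x) ^+ 2 + y ^+ 2)) | <= - ln (1 - r) - r.
Proof.
move=> /andP[r0 r1] hs.
have xr : x <= r by nra.
have xr' : - r <= x by nra.
set u := (1 + x) ^+ 2 + y ^+ 2.
have x1 : 0 < 1 + x by lra.
have u0 : 0 < u by rewrite /u; nra.
have su0 : 0 < Num.sqrt u by rewrite sqrtr_gt0.
have lnu : ln u = ln (Num.sqrt u) * 2.
  by rewrite -{1}(@sqr_sqrtr _ u) ?ltW // lnXn // mulr_natr.
have ha := @bnd_a r ltac:(lra).
rewrite ler_norml; apply/andP; split.
-
  have h := @le_ln1Dx R (u - 1) ltac:(lra).
  have e : 1 + (u - 1) = u by ring.
  rewrite e lnu in h.
  have : u - 1 <= 2 * x + r ^+ 2 by rewrite /u; nra.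
  lra.
-
  have hu : ln ((1 + x) ^+ 2) <= ln u.
    by rewrite ler_ln ?posrE //; rewrite /u; nra.
  rewrite lnXn // lnu in hu.
  have [x0|x0] := leP x 0.
  + have hc := @bnd_c (1 + x) (1 - r) x1 ltac:(lra).
    have : (1 - r) / (1 + x) <= 1 - x - r.
      rewrite ler_pdivrMr //; nra.
    lra.
  + have hb := @bnd_b x (ltW x0).
    have : x ^+ 2 <= r ^+ 2 by nra.
    lra.
Qed.
End S_a.

Section S_b.
Variable R : realType.
Lemma cscal (z : R[i]) (r : R) : 0 <= r < 1 -> Re z ^+ 2 + Im z ^+ 2 <= r ^+ 2 ->
  `| Re z - ln (normc (1 + z)) | <= - ln (1 - r) - r.
Proof.
case: z => a b /= hr hs.
rewrite add0r.
exact: scal.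
Qed.
Lemma cpos (z : R[i]) (r : R) : 0 <= r < 1 -> Re z ^+ 2 + Im z ^+ 2 <= r ^+ 2 ->
  0 < normc (1 + z).
Proof.
case: z => a b /= /andP[r0 r1] hs.
rewrite add0r sqrtr_gt0.
have : - r <= a by nra.
nra.
Qed.
Lemma normc_real (x : R) : normc (x%:C)%C = `|x|.
Proof. by rewrite /normc /= expr0n /= addr0 sqrtr_sqr. Qed.
Lemma Re_sum n (F : 'I_n -> R[i]) : Re (\sum_(i < n) F i) = \sum_(i < n) Re (F i).
Proof.
apply: (big_morph (@complex.Re R)) => //; by move=> [a b] [c d].
Qed.
Lemma Im_sum n (F : 'I_n -> R[i]) : Im (\sum_(i < n) F i) = \sum_(i < n) Im (F i).
Proof.
apply: (big_morph (@complex.Im R)) => //; by move=> [a b] [c d].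
Qed.
End S_b.

Section S_c.
Variable R : realType.
Definition sq {n} (v : 'rV[R]_n) := \sum_(j < n) v 0 j ^+ 2.

Lemma ReM_real (z : R[i]) (c : R) : Re (z * (real_complex R c)) = Re z * c.
Proof. by case: z => x y /=; rewrite mulr0 subr0. Qed.
Lemma ImM_real (z : R[i]) (c : R) : Im (z * (real_complex R c)) = Im z * c.
Proof. by case: z => x y /=; rewrite mulr0 add0r. Qed.

Lemma eig_bound n (M : 'M[R]_n) (L : R) : 0 <= L ->
  (forall v, sq (v *m M) <= L ^+ 2 * sq v) ->
  forall (lam : R[i]) (v : 'rV[R[i]]_n), v *m map_mx (real_complex R) M = lam *: v -> v != 0 ->
  Re lam ^+ 2 + Im lam ^+ 2 <= L ^+ 2.
Proof.
move=> L0 HM lam v hv vN0.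
pose a := \row_j Re (v 0 j); pose b := \row_j Im (v 0 j).
have ea : forall j, (a *m M) 0 j = Re (lam * v 0 j).
  move=> j; have hj := hv; move/rowP/(_ j): hj; rewrite !mxE => <-.
  rewrite Re_sum; apply: eq_bigr => i _; by rewrite !mxE ReM_real.
have eb : forall j, (b *m M) 0 j = Im (lam * v 0 j).
  move=> j; have hj := hv; move/rowP/(_ j): hj; rewrite !mxE => <-.
  rewrite Im_sum; apply: eq_bigr => i _; by rewrite !mxE ImM_real.
have key : sq (a *m M) + sq (b *m M) = (Re lam ^+ 2 + Im lam ^+ 2) * (sq a + sq b).
  rewrite /sq -big_split /= -big_split /= mulr_sumr; apply: eq_bigr => j _.
  rewrite ea eb !mxE; case: lam {hv ea eb} => x y; case: (v 0 j) => p q /=; ring.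
have Spos : 0 < sq a + sq b.
  have [j vj] : exists j, v 0 j != 0.
    apply/existsP; apply: contraNT vN0 => /existsPn H; apply/eqP/rowP => j.
    by rewrite mxE; apply/eqP/negPn/H.
  rewrite /sq -big_split /=.
  rewrite (bigD1 j) //= ltr_pwDl //; last first.
    by apply: sumr_ge0 => i _; rewrite addr_ge0 ?sqr_ge0.
  rewrite !mxE lt_neqAle addr_ge0 ?sqr_ge0 // andbT eq_sym paddr_eq0 ?sqr_ge0 // !sqrf_eq0.
  by apply: contra vj; case: (v 0 j) => p q /= /andP[/eqP-> /eqP->].
have h1 := HM a; have h2 := HM b.
have : (Re lam ^+ 2 + Im lam ^+ 2) * (sq a + sq b) <= L ^+ 2 * (sq a + sq b) by lra.
by rewrite ler_pM2r.
Qed.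
End S_c.
Arguments sq {R n}.

Section S_d.
Variable R : realType.

Lemma ln_prod n (F : 'I_n -> R) : (forall i, 0 < F i) ->
  ln (\prod_(i < n) F i) = \sum_(i < n) ln (F i).
Proof.
elim: n F => [|n IH] F Fp; first by rewrite !big_ord0 ln1.
rewrite !big_ord_recr /= lnM ?posrE ?IH //.
by apply: prodr_gt0 => j _.
Qed.

Lemma main_mx n (M : 'M[R]_n.+1) (L : R) : 0 <= L < 1 ->
  (forall v, sq (v *m M) <= L ^+ 2 * sq v) ->
  `| \tr M - ln `| \det (1%:M + M) | | <= n.+1%:R * (- ln (1 - L) - L).
Proof.
move=> /andP[L0 L1] HM.
set MC := map_mx (real_complex R) M.
have [P Pu Ptrig] := @Schur _ _ MC (ltn0Sn n).
have Punit := unitarymx_unit Pu.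
set T := conjmx P MC in Ptrig.
have TE : T = P *m MC *m invmx P by rewrite /T conjumx.
have eig : forall i, Re (T i i) ^+ 2 + Im (T i i) ^+ 2 <= L ^+ 2.
  move=> i; have : eigenvalue MC (T i i).
    apply: (@eigenvalue_conjmx _ _ _ P MC); first exact: stablemx_unit.
      by rewrite row_free_unit.
    rewrite [_ \in _]eigenvalue_root_char -/T char_poly_trig // /root horner_prod.
    by apply/prodf_eq0; exists i => //; rewrite hornerXsubC subrr.
  by move/eigenvalueP => [v hv vN0]; exact: (@eig_bound R n.+1 M L L0 HM _ _ hv vN0).
have trE : (\tr M)%:C%C = \sum_i T i i.
  rewrite -trace_map_mx -/MC.
  have -> : \tr MC = \tr T by rewrite TE mxtrace_mulC mulKmx.
  by [].
have detE : (\det (1%:M + M))%:C%C = \prod_i (1 + T i i).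
  rewrite -det_map_mx map_mxD map_mx1 -/MC.
  have -> : 1%:M + MC = invmx P *m (1%:M + T) *m P.
    by rewrite TE mulmxDr mulmxDl mulmx1 mulVmx // !mulmxA mulVmx // mul1mx mulmxKV.
  rewrite !det_mulmx mulrAC -det_mulmx mulVmx // det1 mul1r det_trig.
    by apply: eq_bigr => i _; rewrite !mxE eqxx mulr1n.
  apply/is_trig_mxP => i j ij.
  have /is_trig_mxP := Ptrig => /(_ i j ij) Tij.
  rewrite mxE -/T Tij mxE.
  by rewrite -val_eqE /= ltn_eqF // addr0.
have ReT : \tr M = \sum_i Re (T i i) by rewrite -Re_sum -trE.
have detN : `|\det (1%:M + M)| = \prod_i normc (1 + T i i).
  by rewrite -normc_real detE (big_morph _ (@normcM _) (@normc1 _)).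
rewrite ReT detN ln_prod; last by move=> i; apply: (@cpos R _ L _ (eig i)); rewrite L0 L1.
rewrite -sumrB; apply: le_trans (ler_norm_sum _ _ _) _.
have -> : n.+1%:R * (- ln (1 - L) - L) = \sum_(i < n.+1) (- ln (1 - L) - L) by rewrite sumr_const card_ord mulr_natl.
apply: ler_sum => i _; apply: (@cscal R _ L _ (eig i)); by rewrite L0 L1.
Qed.
End S_d.

Local Open Scope classical_set_scope.
Section S_e.
Variable R : realType.

Lemma sqZ n (c : R) (w : 'rV[R]_n) : sq (c *: w) = c ^+ 2 * sq w.
Proof. rewrite /sq mulr_sumr; apply: eq_bigr => j _; by rewrite mxE exprMn. Qed.

Lemma jac_bound n (f : 'rV[R]_n -> 'rV[R]_n) x0 (L : R) :
  (forall x, differentiable f x) ->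
  (forall x y, sq (f x - f y) <= L ^+ 2 * sq (x - y)) ->
  forall v, sq (v *m jacobian f x0) <= L ^+ 2 * sq v.
Proof.
move=> Hd HL v.
rewrite -deriveEjacobian //.
have dv : derivable f x0 v := diff_derivable (Hd x0).
set q := (fun h : R => h^-1 *: ((f \o shift x0) (h *: v) - f x0)).
have cq : q @ 0^' --> 'D_v f x0 := dv.
have cs : (fun h => sq (q h)) @ 0^' --> sq ('D_v f x0).
  rewrite /sq; apply: cvg_big => //.
    exact: add_continuous.
  move=> j _. have cj : q h 0 j @[h --> 0^'] --> derive f x0 v 0 j.
    exact: (cvg_comp _ _ cq (@coord_continuous R 1 n 0 j (derive f x0 v))).
  by apply: cvgM; exact: cj.
apply: (cvgr_to_le cs).
apply: filterS (nbhs_dnbhs_neq 0) => h hn0.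
rewrite /q sqZ /= .
have := HL (h *: v + x0) x0.
rewrite addrK sqZ => H.
rewrite exprVn.
have h2 : 0 < h ^+ 2 by rewrite lt_def sqrf_eq0 hn0 sqr_ge0.
rewrite ler_pdivrMl //.
by rewrite mulrCA.
Qed.
End S_e.

End Helpers.
Local Close Scope classical_set_scope.

Theorem theorem1 (R : realType) (d : nat) (f : 'rV[R]_d.+1 -> 'rV[R]_d.+1)
  (x0 : 'rV[R]_d.+1) (L : R) :
  (forall x, differentiable f x) ->
  euclid_lipschitz f L -> L < 1 ->
  let A := jacobian f x0 in
  `| \tr A - ln `| \det (1%:M + A) | | <= d.+1%:R * (- ln (1 - L) - L).
Proof.
move=> Hd HL L1.
have sqE : forall v : 'rV[R]_d.+1, euclid_norm v = Num.sqrt (Helpers.sq v) by [].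
have L0 : 0 <= L.
  have h := HL (const_mx 1) 0.
  rewrite subr0 !sqE in h.
  have sp : 0 < Num.sqrt (Helpers.sq (const_mx 1 : 'rV[R]_d.+1)).
    rewrite sqrtr_gt0 /Helpers.sq (bigD1 ord0) //= mxE expr1n.
    by rewrite ltr_pwDl ?ltr01 //; apply: sumr_ge0 => i _; rewrite sqr_ge0.
  have := le_trans (sqrtr_ge0 _) h.
  by rewrite pmulr_lge0.
have HL2 : forall x y, Helpers.sq (f x - f y) <= L ^+ 2 * Helpers.sq (x - y).
  move=> x y; have h := HL x y; rewrite !sqE in h.
  have a0 : 0 <= Helpers.sq (f x - f y) by apply: sumr_ge0 => i _; rewrite sqr_ge0.
  have b0 : 0 <= Helpers.sq (x - y) by apply: sumr_ge0 => i _; rewrite sqr_ge0.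
  have ea := sqr_sqrtr a0; have eb := sqr_sqrtr b0.
  have s1 := sqrtr_ge0 (Helpers.sq (f x - f y)).
  have s2 := sqrtr_ge0 (Helpers.sq (x - y)).
  rewrite -ea -eb; nra.
apply: Helpers.main_mx; first by rewrite L0 L1.
exact: Helpers.jac_bound.
Qed.
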